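(* Let $\{(\Gamma_t,\theta_t)\}_{t\in[0,\underline t)}$ solve the framed curvature flow and let $A_p(\Gamma_t):=\frac12\int_{\Gamma_t}\gamma\times\partial_s\gamma\,ds\in\mathbb{R}^3$. Then $$\frac{d}{dt}A_p(\Gamma_t)=-\int_{\Gamma_t}\kappa\,\beta_\theta\,ds .$$
   Context: $S^1=\mathbb{R}/2\pi\mathbb{Z}$; closed curves $\Gamma_t$ parametrized by $\gamma(t,\cdot):S^1\to\mathbb{R}^3$, $g=\|\partial_u\gamma\|$, $ds=g\,du$, $\partial_s=g^{-1}\partial_u$; Frenet frame $T,N,B$, curvature $\kappa$; angle function $\theta$, $\theta$-normal $\nu_\theta=\cos\theta N+\sin\theta B$, $\theta$-binormal $\beta_\theta=-\sin\theta N+\cos\theta B=T\times\nu_\theta$. Framed curvature flow: $\partial_t\gamma=\kappa\nu_\theta$, $\partial_t\theta=\upsilon_\theta$. *)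

(* Defs.v *)
From Stdlib Require Import Reals.
From Coquelicot Require Import Coquelicot.
Open Scope R_scope.

Definition V3 : Type := (R * R * R)%type.
Definition vx (v : V3) : R := fst (fst v).
Definition vy (v : V3) : R := snd (fst v).
Definition vz (v : V3) : R := snd v.
Definition mkV (x y z : R) : V3 := (x, y, z).
Definition vadd (v w : V3) : V3 := mkV (vx v + vx w) (vy v + vy w) (vz v + vz w).
Definition vscal (a : R) (v : V3) : V3 := mkV (a * vx v) (a * vy v) (a * vz v).
Definition vopp (v : V3) : V3 := vscal (-1) v.
Definition vdot (v w : V3) : R := vx v * vx w + vy v * vy w + vz v * vz w.
Definition vnorm (v : V3) : R := sqrt (vdot v v).
Definition cross (v w : V3) : V3 :=
  mkV (vy v * vz w - vz v * vy w)
      (vz v * vx w - vx v * vz w)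
      (vx v * vy w - vy v * vx w).

Definition pt (f : R -> R -> R) (t u : R) : R := Derive (fun s => f s u) t.
Definition pu (f : R -> R -> R) (t u : R) : R := Derive (fun v => f t v) u.

Definition vpt (F : R -> R -> V3) (t u : R) : V3 :=
  mkV (pt (fun a b => vx (F a b)) t u) (pt (fun a b => vy (F a b)) t u)
      (pt (fun a b => vz (F a b)) t u).
Definition vpu (F : R -> R -> V3) (t u : R) : V3 :=
  mkV (pu (fun a b => vx (F a b)) t u) (pu (fun a b => vy (F a b)) t u)
      (pu (fun a b => vz (F a b)) t u).

Fixpoint Ck_on (D : R -> Prop) (k : nat) (f : R -> R -> R) : Prop :=
  (forall t u, D t -> continuous (fun p : R * R => f (fst p) (snd p)) (t, u)) /\
  match k with
  | O => True
  | S k' =>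
      (forall t u, D t -> ex_derive (fun s => f s u) t /\ ex_derive (fun v => f t v) u)
      /\ Ck_on D k' (pt f) /\ Ck_on D k' (pu f)
  end.

Definition smooth_on (D : R -> Prop) (f : R -> R -> R) : Prop := forall k, Ck_on D k f.
Definition vsmooth_on (D : R -> Prop) (F : R -> R -> V3) : Prop :=
  smooth_on D (fun a b => vx (F a b)) /\ smooth_on D (fun a b => vy (F a b)) /\
  smooth_on D (fun a b => vz (F a b)).

Section Geometry.
Variable gamma : R -> R -> V3.

Definition speed (t u : R) : R := vnorm (vpu gamma t u).
(* unit tangent T = d_s gamma = g^-1 d_u gamma *)
Definition tangent (t u : R) : V3 := vscal (/ speed t u) (vpu gamma t u).
Definition ds_tangent (t u : R) : V3 := vscal (/ speed t u) (vpu tangent t u).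
Definition curvature (t u : R) : R := vnorm (ds_tangent t u).
Definition fnormal (t u : R) : V3 := vscal (/ curvature t u) (ds_tangent t u).
Definition fbinormal (t u : R) : V3 := cross (tangent t u) (fnormal t u).

Variable theta : R -> R -> R.
Definition theta_normal (t u : R) : V3 :=
  vadd (vscal (cos (theta t u)) (fnormal t u)) (vscal (sin (theta t u)) (fbinormal t u)).
Definition theta_binormal (t u : R) : V3 :=
  vadd (vscal (- sin (theta t u)) (fnormal t u)) (vscal (cos (theta t u)) (fbinormal t u)).
End Geometry.

Definition vRInt (F : R -> V3) (a b : R) : V3 :=
  mkV (RInt (fun u => vx (F u)) a b) (RInt (fun u => vy (F u)) a b)
      (RInt (fun u => vz (F u)) a b).

(** A_p(Gamma_t) = 1/2 \int_{Gamma_t} gamma x d_s gamma ds, ds = g du. *)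
Definition Ap (gamma : R -> R -> V3) (t : R) : V3 :=
  vscal (1/2) (vRInt (fun u => vscal (speed gamma t u) (cross (gamma t u) (tangent gamma t u)))
                     0 (2 * PI)).

Definition vis_derive (F : R -> V3) (t : R) (L : V3) : Prop :=
  is_derive (fun s => vx (F s)) t (vx L) /\ is_derive (fun s => vy (F s)) t (vy L) /\
  is_derive (fun s => vz (F s)) t (vz L).

(* Main.v *)
Require Import Defs.
From Stdlib Require Import Reals Lra.
From Coquelicot Require Import Coquelicot.
Open Scope R_scope.

Definition C2 (f : R -> R -> R) t u := continuous (fun p : R * R => f (fst p) (snd p)) (t, u).

Lemma C2_u f t u : C2 f t u -> continuous (fun v => f t v) u.
Proof.
  intro H. apply (continuous_comp_2 (fun _ => t) (fun v => v) f u).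
  apply continuous_const. apply continuous_id. exact H.
Qed.

Lemma C2_mult f g t u : C2 f t u -> C2 g t u -> C2 (fun a b => f a b * g a b) t u.
Proof. intros Hf Hg. unfold C2. apply (continuous_mult (fun p : R*R => f (fst p) (snd p)) (fun p : R*R => g (fst p) (snd p))); assumption. Qed.

Lemma C2_plus f g t u : C2 f t u -> C2 g t u -> C2 (fun a b => f a b + g a b) t u.
Proof. intros Hf Hg. unfold C2. apply (continuous_plus (fun p : R*R => f (fst p) (snd p)) (fun p : R*R => g (fst p) (snd p))); assumption. Qed.

Lemma C2_minus f g t u : C2 f t u -> C2 g t u -> C2 (fun a b => f a b - g a b) t u.
Proof. intros Hf Hg. unfold C2. apply (continuous_minus (fun p : R*R => f (fst p) (snd p)) (fun p : R*R => g (fst p) (snd p))); assumption. Qed.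

Lemma locD tbar t : 0 < t < tbar -> locally t (fun s => 0 < s < tbar).
Proof.
  intro H. apply (locally_interval _ t (Finite 0) (Finite tbar)); simpl; try lra.
  intros; lra.
Qed.

Lemma locD2 tbar t u : 0 < t < tbar -> locally (t, u) (fun p : R * R => 0 < fst p < tbar).
Proof.
  intro H. apply (locally_2d_locally (fun a b => 0 < a < tbar)).
  destruct (locD tbar t H) as [e He].
  exists e. intros a b Ha Hb. apply He. exact Ha.
Qed.

Lemma C2_to_2d tbar F G t u : 0 < t < tbar -> (forall s v, 0 < s < tbar -> F s v = G s v) ->
  C2 G t u -> continuity_2d_pt F t u.
Proof.
  intros Ht Heq HG. apply continuity_2d_pt_filterlim.
  rewrite (Heq t u Ht).
  eapply filterlim_ext_loc; [| exact HG].
  generalize (locD2 tbar t u Ht). apply filter_imp. intros [a b] Hab. simpl in *. symmetry. apply Heq. exact Hab.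
Qed.

Lemma C2_ext tbar F G t u : 0 < t < tbar -> (forall s v, 0 < s < tbar -> F s v = G s v) ->
  C2 G t u -> C2 F t u.
Proof.
  intros Ht Heq HG. unfold C2.
  eapply continuous_ext_loc; [| exact HG].
  generalize (locD2 tbar t u Ht). apply filter_imp. intros [a b] Hab. simpl in *. symmetry; apply Heq. exact Hab.
Qed.

Lemma ck2 (D : R -> Prop) f t u : Ck_on D 2 f -> D t ->
  C2 f t u /\ C2 (pt f) t u /\ C2 (pu f) t u /\
  C2 (pt (pt f)) t u /\ C2 (pu (pt f)) t u /\ C2 (pt (pu f)) t u /\ C2 (pu (pu f)) t u /\
  ex_derive (fun s => f s u) t /\ ex_derive (fun v => f t v) u /\
  ex_derive (fun s => pt f s u) t /\ ex_derive (fun v => pt f t v) u /\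
  ex_derive (fun s => pu f s u) t /\ ex_derive (fun v => pu f t v) u.
Proof.
  intros H Dt. simpl in H.
  destruct H as [H0 [H1 [[H2 [H3 [[H4 _] [H5 _]]]] [H6 [H7 [[H8 _] [H9 _]]]]]]].
  destruct (H1 t u Dt). destruct (H3 t u Dt). destruct (H7 t u Dt).
  unfold C2. repeat split; auto.
Qed.

Lemma pt_per tbar f t u : 0 < t < tbar ->
  (forall s v, 0 < s < tbar -> f s (v + 2 * PI) = f s v) -> pt f t (u + 2 * PI) = pt f t u.
Proof.
  intros Ht Hp. unfold pt. apply Derive_ext_loc.
  generalize (locD tbar t Ht). apply filter_imp. intros s Hs. apply Hp; exact Hs.
Qed.

Lemma schwarz_use tbar f t u : Ck_on (fun t => 0 < t < tbar) 2 f -> 0 < t < tbar ->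
  pt (pu f) t u = pu (pt f) t u.
Proof.
  intros Hf Ht.
  apply (Schwarz f t u).
  - apply locally_2d_locally. generalize (locD2 tbar t u Ht). apply filter_imp.
    intros [a b] Hab. simpl in Hab. simpl.
    destruct (ck2 _ f a b Hf Hab) as (_&_&_&_&_&_&_&H1&H2&H3&H4&H5&H6).
    repeat split; assumption.
  - destruct (ck2 _ f t u Hf Ht) as (_&_&_&_&_&H&_).
    exact (C2_to_2d tbar _ _ t u Ht (fun _ _ _ => eq_refl) H).
  - destruct (ck2 _ f t u Hf Ht) as (_&_&_&_&H&_).
    exact (C2_to_2d tbar _ _ t u Ht (fun _ _ _ => eq_refl) H).
Qed.

(* integral of u-derivative of f * pt g over a period vanishes *)
Lemma per_int tbar f g t : Ck_on (fun t => 0 < t < tbar) 2 f -> Ck_on (fun t => 0 < t < tbar) 2 g ->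
  (forall s v, 0 < s < tbar -> f s (v + 2 * PI) = f s v) ->
  (forall s v, 0 < s < tbar -> g s (v + 2 * PI) = g s v) -> 0 < t < tbar ->
  is_RInt (fun v => pu f t v * pt g t v + f t v * pu (pt g) t v) 0 (2 * PI) 0.
Proof.
  intros Hf Hg Pf Pg Ht.
  assert (E : 0 = minus (f t (2*PI) * pt g t (2*PI)) (f t 0 * pt g t 0)).
  { replace (2*PI) with (0 + 2*PI) by ring. rewrite Pf by exact Ht.
    rewrite (pt_per tbar g t 0 Ht Pg). unfold minus, plus, opp; simpl. ring. }
  cut (is_RInt (fun v => pu f t v * pt g t v + f t v * pu (pt g) t v) 0 (2 * PI)
     (minus (f t (2*PI) * pt g t (2*PI)) (f t 0 * pt g t 0))).
  { intro H. rewrite <- E in H. exact H. }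
  apply (is_RInt_derive (fun v => f t v * pt g t v)).
  - intros v _.
    destruct (ck2 _ f t v Hf Ht) as (_&_&_&_&_&_&_&_&Hfu&_).
    destruct (ck2 _ g t v Hg Ht) as (_&_&_&_&_&_&_&_&_&_&Hgu&_).
    apply (is_derive_mult (fun v => f t v) (fun v => pt g t v)).
    + apply Derive_correct. exact Hfu.
    + apply Derive_correct. exact Hgu.
    + intros; apply Rmult_comm.
  - intros v _. apply (C2_u (fun a b => pu f a b * pt g a b + f a b * pu (pt g) a b)).
    destruct (ck2 _ f t v Hf Ht) as (Hf0&_&Hf2&_).
    destruct (ck2 _ g t v Hg Ht) as (_&Hg1&_&_&Hg4&_).
    apply C2_plus; apply C2_mult; assumption.
Qed.

Lemma key tbar f g t : Ck_on (fun t => 0 < t < tbar) 2 f -> Ck_on (fun t => 0 < t < tbar) 2 g ->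
  (forall s v, 0 < s < tbar -> f s (v + 2 * PI) = f s v) ->
  (forall s v, 0 < s < tbar -> g s (v + 2 * PI) = g s v) -> 0 < t < tbar ->
  is_derive (fun s => RInt (fun u => f s u * pu g s u - g s u * pu f s u) 0 (2 * PI)) t
    (2 * RInt (fun u => pt f t u * pu g t u - pt g t u * pu f t u) 0 (2 * PI)).
Proof.
  intros Hf Hg Pf Pg Ht.
  set (h' := fun s v => pt f s v * pu g s v + f s v * pt (pu g) s v
                      - (pt g s v * pu f s v + g s v * pt (pu f) s v)).
  set (k := fun v => pt f t v * pu g t v - pt g t v * pu f t v).
  assert (Dh : forall s v, 0 < s < tbar ->
     Derive (fun z => f z v * pu g z v - g z v * pu f z v) s = h' s v).
  { intros s v Hs.
    destruct (ck2 _ f s v Hf Hs) as (_&_&_&_&_&_&_&Hft&_&_&_&Hfut&_).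
    destruct (ck2 _ g s v Hg Hs) as (_&_&_&_&_&_&_&Hgt&_&_&_&Hgut&_).
    rewrite Derive_minus.
    2: apply (ex_derive_mult (fun z => f z v) (fun z => pu g z v)); assumption.
    2: apply (ex_derive_mult (fun z => g z v) (fun z => pu f z v)); assumption.
    rewrite (Derive_mult (fun z => f z v) (fun z => pu g z v)) by assumption.
    rewrite (Derive_mult (fun z => g z v) (fun z => pu f z v)) by assumption.
    unfold h', pt. reflexivity. }
  assert (Ch' : forall s v, 0 < s < tbar -> C2 h' s v).
  { intros s v Hs.
    destruct (ck2 _ f s v Hf Hs) as (Hf0&Hf1&Hf2&_&_&Hf5&_).
    destruct (ck2 _ g s v Hg Hs) as (Hg0&Hg1&Hg2&_&_&Hg5&_).
    unfold h'. apply C2_minus; apply C2_plus; apply C2_mult; assumption. }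
  assert (Ch : forall s v, 0 < s < tbar -> C2 (fun a b => f a b * pu g a b - g a b * pu f a b) s v).
  { intros s v Hs.
    destruct (ck2 _ f s v Hf Hs) as (Hf0&Hf1&Hf2&_&_&Hf5&_).
    destruct (ck2 _ g s v Hg Hs) as (Hg0&Hg1&Hg2&_&_&Hg5&_).
    apply C2_minus; apply C2_mult; assumption. }
  assert (Hk : ex_RInt k 0 (2 * PI)).
  { apply (ex_RInt_continuous (V := R_CompleteNormedModule)). intros v _.
    apply (C2_u (fun a b => pt f a b * pu g a b - pt g a b * pu f a b)).
    destruct (ck2 _ f t v Hf Ht) as (Hf0&Hf1&Hf2&_&_&Hf5&_).
    destruct (ck2 _ g t v Hg Ht) as (Hg0&Hg1&Hg2&_&_&Hg5&_).
    apply C2_minus; apply C2_mult; assumption. }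
  assert (Ih : is_RInt (h' t) 0 (2 * PI) (2 * RInt k 0 (2 * PI))).
  { assert (I1 := is_RInt_scal k 0 (2*PI) 2 _ (RInt_correct _ _ _ Hk)).
    assert (I2 := per_int tbar f g t Hf Hg Pf Pg Ht).
    assert (I3 := per_int tbar g f t Hg Hf Pg Pf Ht).
    assert (I := is_RInt_minus _ _ _ _ _ _ (is_RInt_plus _ _ _ _ _ _ I1 I2) I3).
    replace (2 * RInt k 0 (2 * PI)) with (minus (plus (scal 2 (RInt k 0 (2 * PI))) 0) 0).
    2:{ unfold minus, plus, scal, opp; simpl. unfold mult; simpl. ring. }
    apply (is_RInt_ext _ _ _ _ _ (fun x _ => eq_refl) ) in I.
    eapply is_RInt_ext; [| exact I].
    intros x _. unfold h', k, minus, plus, scal, opp; simpl. unfold mult; simpl.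
    rewrite (schwarz_use tbar g t x Hg Ht), (schwarz_use tbar f t x Hf Ht). ring. }
  replace (2 * RInt k 0 (2 * PI)) with
     (RInt (fun u => Derive (fun z => f z u * pu g z u - g z u * pu f z u) t) 0 (2 * PI)).
  2:{ rewrite <- (is_RInt_unique _ _ _ _ Ih). apply RInt_ext. intros x _. apply Dh. exact Ht. }
  apply (is_derive_RInt_param (fun s u => f s u * pu g s u - g s u * pu f s u)).
  - generalize (locD tbar t Ht). apply filter_imp. intros s Hs v _.
    destruct (ck2 _ f s v Hf Hs) as (_&_&_&_&_&_&_&Hft&_&_&_&Hfut&_).
    destruct (ck2 _ g s v Hg Hs) as (_&_&_&_&_&_&_&Hgt&_&_&_&Hgut&_).
    apply (ex_derive_minus (fun z => f z v * pu g z v) (fun z => g z v * pu f z v)).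
    + apply (ex_derive_mult (fun z => f z v) (fun z => pu g z v)); assumption.
    + apply (ex_derive_mult (fun z => g z v) (fun z => pu f z v)); assumption.
  - intros v _. apply (C2_to_2d tbar _ h' t v Ht).
    + intros s w Hs. apply Dh. exact Hs.
    + apply Ch'. exact Ht.
  - generalize (locD tbar t Ht). apply filter_imp. intros s Hs.
    apply (ex_RInt_continuous (V := R_CompleteNormedModule)). intros v _.
    apply (C2_u (fun a b => f a b * pu g a b - g a b * pu f a b)). apply Ch. exact Hs.
Qed.

Lemma V3eq (a b : V3) : vx a = vx b -> vy a = vy b -> vz a = vz b -> a = b.
Proof. destruct a as [[a1 a2] a3], b as [[b1 b2] b3]. unfold vx, vy, vz; simpl. intros; subst; reflexivity. Qed.

Lemma alg (T d : V3) (g c s : R) : vdot T T = 1 -> vdot d T = 0 ->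
  cross (vscal (vnorm d) (vadd (vscal c (vscal (/ vnorm d) d))
                (vscal s (cross T (vscal (/ vnorm d) d))))) (vscal g T) =
  vopp (vscal g (vscal (vnorm d) (vadd (vscal (- s) (vscal (/ vnorm d) d))
                (vscal c (cross T (vscal (/ vnorm d) d)))))).
Proof.
  destruct T as [[t1 t2] t3], d as [[e1 e2] e3].
  unfold vdot, vx, vy, vz; simpl. intros Htt Hdt.
  set (k := vnorm ((e1, e2, e3))).
  set (n1 := / k * e1). set (n2 := / k * e2). set (n3 := / k * e3).
  assert (Hnt : n1 * t1 + n2 * t2 + n3 * t3 = 0).
  { unfold n1, n2, n3. replace (/ k * e1 * t1 + / k * e2 * t2 + / k * e3 * t3) with (/k * (e1 * t1 + e2 * t2 + e3 * t3)) by ring.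
    rewrite Hdt. ring. }
  apply V3eq; unfold vopp, vscal, vadd, cross, mkV, vx, vy, vz; simpl; fold n1 n2 n3.
  - match goal with |- ?L = ?R => assert (E : L - R = g*k*s*(n1*(t1*t1+t2*t2+t3*t3-1) - t1*(n1 * t1 + n2 * t2 + n3 * t3))) by ring end.
    rewrite Htt, Hnt in E. lra.
  - match goal with |- ?L = ?R => assert (E : L - R = g*k*s*(n2*(t1*t1+t2*t2+t3*t3-1) - t2*(n1 * t1 + n2 * t2 + n3 * t3))) by ring end.
    rewrite Htt, Hnt in E. lra.
  - match goal with |- ?L = ?R => assert (E : L - R = g*k*s*(n3*(t1*t1+t2*t2+t3*t3-1) - t3*(n1 * t1 + n2 * t2 + n3 * t3))) by ring end.
    rewrite Htt, Hnt in E. lra.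
Qed.

Lemma unit_deriv (a1 a2 a3 : R -> R) u :
  (forall v, 0 < sqrt (a1 v * a1 v + a2 v * a2 v + a3 v * a3 v)) ->
  ex_derive a1 u -> ex_derive a2 u -> ex_derive a3 u ->
  let n := fun v => sqrt (a1 v * a1 v + a2 v * a2 v + a3 v * a3 v) in
  Derive (fun v => / n v * a1 v) u * (/ n u * a1 u) +
  Derive (fun v => / n v * a2 v) u * (/ n u * a2 u) +
  Derive (fun v => / n v * a3 v) u * (/ n u * a3 u) = 0.
Proof.
  intros Hpos H1 H2 H3 n.
  assert (Hs : forall v, 0 < a1 v * a1 v + a2 v * a2 v + a3 v * a3 v).
  { intro v. generalize (Hpos v). intro Hp.
    destruct (Rle_or_lt (a1 v * a1 v + a2 v * a2 v + a3 v * a3 v) 0) as [Hle|Hlt]; [|exact Hlt].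
    rewrite (sqrt_neg_0 _ Hle) in Hp. lra. }
  assert (Ex : forall a : R -> R, ex_derive a u -> ex_derive (fun v => / n v * a v) u).
  { intros a Ha. unfold n. auto_derive. repeat split; auto.
    all: try apply Hs.
    all: generalize (Hpos u); lra. }
  set (T1 := fun v => / n v * a1 v). set (T2 := fun v => / n v * a2 v). set (T3 := fun v => / n v * a3 v).
  assert (HF : forall v, T1 v * T1 v + T2 v * T2 v + T3 v * T3 v = 1).
  { intro v. unfold T1, T2, T3, n.
    generalize (Hs v) (sqrt_sqrt (a1 v * a1 v + a2 v * a2 v + a3 v * a3 v)) (Hpos v). intros A B C.
    set (S := a1 v * a1 v + a2 v * a2 v + a3 v * a3 v) in *.
    set (q := sqrt S) in *.
    replace (/ q * a1 v * (/ q * a1 v) + / q * a2 v * (/ q * a2 v) + / q * a3 v * (/ q * a3 v)) with (S / (q * q)).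
    2:{ unfold S. field. lra. }
    rewrite B by lra. field. lra. }
  assert (D1 : is_derive (fun v => T1 v * T1 v + T2 v * T2 v + T3 v * T3 v) u 0).
  { apply (is_derive_ext (fun _ => 1)). intro v. symmetry. apply HF. apply (is_derive_const 1). }
  assert (D2 : is_derive (fun v => T1 v * T1 v + T2 v * T2 v + T3 v * T3 v) u
     (2 * (Derive T1 u * T1 u + Derive T2 u * T2 u + Derive T3 u * T3 u))).
  { assert (P : forall T : R -> R, ex_derive T u -> is_derive (fun v => T v * T v) u (2 * (Derive T u * T u))).
    { intros T HT. generalize (is_derive_mult T T u _ _ (Derive_correct _ _ HT) (Derive_correct _ _ HT) Rmult_comm).
      intro H. replace (2 * (Derive T u * T u)) with (plus (mult (Derive T u) (T u)) (mult (T u) (Derive T u))).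
      exact H. unfold plus, mult; simpl. ring. }
    generalize (is_derive_plus _ _ _ _ _ (is_derive_plus _ _ _ _ _ (P T1 (Ex a1 H1)) (P T2 (Ex a2 H2))) (P T3 (Ex a3 H3))).
    intro Q.
    replace (2 * (Derive T1 u * T1 u + Derive T2 u * T2 u + Derive T3 u * T3 u)) with
      (plus (plus (2 * (Derive T1 u * T1 u)) (2 * (Derive T2 u * T2 u))) (2 * (Derive T3 u * T3 u))).
    exact Q. unfold plus; simpl; ring. }
  apply is_derive_unique in D1. apply is_derive_unique in D2.
  rewrite D1 in D2. unfold T1, T2, T3 in D2. unfold T1, T2, T3. lra.
Qed.

Lemma geo tbar gamma theta t u : 0 < t < tbar -> vsmooth_on (fun t => 0 < t < tbar) gamma ->
  (forall v, 0 < speed gamma t v) ->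
  vpt gamma t u = vscal (curvature gamma t u) (theta_normal gamma theta t u) ->
  cross (vpt gamma t u) (vpu gamma t u) =
  vopp (vscal (speed gamma t u) (vscal (curvature gamma t u) (theta_binormal gamma theta t u))).
Proof.
  intros Ht [HX [HY HZ]] Hsp Hfl.
  assert (F1 : vpu gamma t u = vscal (speed gamma t u) (tangent gamma t u)).
  { generalize (Hsp u). intro Hs. apply V3eq; unfold tangent, vscal, mkV, vx, vy, vz; simpl; field; lra. }
  assert (F2 : vdot (tangent gamma t u) (tangent gamma t u) = 1).
  { generalize (Hsp u). intro Hs. unfold tangent, speed, vnorm in *.
    set (w := vpu gamma t u) in *.
    assert (Hd : 0 < vdot w w).
    { destruct (Rle_or_lt (vdot w w) 0) as [Hle|]; auto. rewrite (sqrt_neg_0 _ Hle) in Hs. lra. }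
    generalize (sqrt_sqrt (vdot w w) (Rlt_le _ _ Hd)). intro Hq.
    set (q := sqrt (vdot w w)) in *.
    unfold vdot, vscal, mkV, vx, vy, vz in *; simpl in *.
    set (p1 := pu (fun a b : R => vx (gamma a b)) t u) in *.
    set (p2 := pu (fun a b : R => vy (gamma a b)) t u) in *.
    set (p3 := pu (fun a b : R => vz (gamma a b)) t u) in *.
    transitivity ((p1 * p1 + p2 * p2 + p3 * p3) / (q * q)). field; lra.
    rewrite <- Hq. field. lra. }
  assert (F3 : vdot (ds_tangent gamma t u) (tangent gamma t u) = 0).
  { destruct (ck2 _ _ t u (HX 2%nat) Ht) as (_&_&_&_&_&_&_&_&_&_&_&_&E1).
    destruct (ck2 _ _ t u (HY 2%nat) Ht) as (_&_&_&_&_&_&_&_&_&_&_&_&E2).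
    destruct (ck2 _ _ t u (HZ 2%nat) Ht) as (_&_&_&_&_&_&_&_&_&_&_&_&E3).
    generalize (unit_deriv _ _ _ u Hsp E1 E2 E3). intro U.
    assert (U' : Derive (fun v => vx (tangent gamma t v)) u * vx (tangent gamma t u) +
                 Derive (fun v => vy (tangent gamma t v)) u * vy (tangent gamma t u) +
                 Derive (fun v => vz (tangent gamma t v)) u * vz (tangent gamma t u) = 0) by exact U.
    change (/ speed gamma t u * Derive (fun v => vx (tangent gamma t v)) u * vx (tangent gamma t u) +
            / speed gamma t u * Derive (fun v => vy (tangent gamma t v)) u * vy (tangent gamma t u) +
            / speed gamma t u * Derive (fun v => vz (tangent gamma t v)) u * vz (tangent gamma t u) = 0).
    rewrite <- (Rmult_0_r (/ speed gamma t u)), <- U'. ring. }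
  rewrite Hfl, F1.
  unfold theta_normal, theta_binormal, fbinormal, fnormal, curvature.
  apply alg; assumption.
Qed.

Lemma exk tbar f g t : Ck_on (fun t => 0 < t < tbar) 2 f -> Ck_on (fun t => 0 < t < tbar) 2 g ->
  0 < t < tbar -> ex_RInt (fun u => pt f t u * pu g t u - pt g t u * pu f t u) 0 (2 * PI).
Proof.
  intros Hf Hg Ht.
  apply (ex_RInt_continuous (V := R_CompleteNormedModule)). intros v _.
  apply (C2_u (fun a b => pt f a b * pu g a b - pt g a b * pu f a b)).
  destruct (ck2 _ f t v Hf Ht) as (Hf0&Hf1&Hf2&_&_&Hf5&_).
  destruct (ck2 _ g t v Hg Ht) as (Hg0&Hg1&Hg2&_&_&Hg5&_).
  apply C2_minus; apply C2_mult; assumption.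
Qed.

Lemma compo tbar f g (A q : R -> R) t L : Ck_on (fun t => 0 < t < tbar) 2 f -> Ck_on (fun t => 0 < t < tbar) 2 g ->
  (forall s v, 0 < s < tbar -> f s (v + 2 * PI) = f s v) ->
  (forall s v, 0 < s < tbar -> g s (v + 2 * PI) = g s v) -> 0 < t < tbar ->
  (forall s, 0 < s < tbar -> A s = 1/2 * RInt (fun u => f s u * pu g s u - g s u * pu f s u) 0 (2 * PI)) ->
  (forall u, pt f t u * pu g t u - pt g t u * pu f t u = -1 * q u) ->
  L = -1 * RInt q 0 (2 * PI) ->
  is_derive A t L.
Proof.
  intros Hf Hg Pf Pg Ht HA Hq HL.
  apply (is_derive_ext_loc (fun s => 1/2 * RInt (fun u => f s u * pu g s u - g s u * pu f s u) 0 (2 * PI))).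
  { generalize (locD tbar t Ht). apply filter_imp. intros s Hs. symmetry. apply HA. exact Hs. }
  assert (K := is_derive_scal _ _ (1/2) _ (key tbar f g t Hf Hg Pf Pg Ht)).
  replace L with (1/2 * (2 * RInt (fun u => pt f t u * pu g t u - pt g t u * pu f t u) 0 (2 * PI))).
  exact K.
  rewrite HL.
  assert (I := is_RInt_scal _ _ _ (-1) _ (RInt_correct _ _ _ (exk tbar f g t Hf Hg Ht))).
  assert (I' : is_RInt q 0 (2 * PI) (scal (-1) (RInt (fun u => pt f t u * pu g t u - pt g t u * pu f t u) 0 (2 * PI)))).
  { eapply is_RInt_ext; [| exact I]. intros x _. unfold scal; simpl; unfold mult; simpl. rewrite Hq. ring. }
  rewrite (is_RInt_unique _ _ _ _ I'). unfold scal; simpl; unfold mult; simpl. field.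
Qed.

Theorem mainTheorem13
  (tbar : R) (gamma : R -> R -> V3) (theta upsilon : R -> R -> R) :
  0 < tbar ->
  vsmooth_on (fun t => 0 < t < tbar) gamma ->
  smooth_on (fun t => 0 < t < tbar) theta ->
  (forall t u, 0 <= t < tbar -> gamma t (u + 2 * PI) = gamma t u) ->
  (forall t u, 0 <= t < tbar -> 0 < speed gamma t u) ->
  (forall t u, 0 < t < tbar ->
     vpt gamma t u = vscal (curvature gamma t u) (theta_normal gamma theta t u)) ->
  (forall t u, 0 < t < tbar -> pt theta t u = upsilon t u) ->
  forall t, 0 < t < tbar ->
    vis_derive (Ap gamma) t
      (vopp (vRInt (fun u => vscal (speed gamma t u)
                        (vscal (curvature gamma t u) (theta_binormal gamma theta t u)))
                   0 (2 * PI))).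
Proof.
  intros Htb Hsm Hth Hper Hsp Hfl Hup t Ht.
  pose proof Hsm as Hsm'.
  destruct Hsm as [HX [HY HZ]].
  assert (PX : forall s v, 0 < s < tbar -> vx (gamma s (v + 2 * PI)) = vx (gamma s v)).
  { intros s v Hs. rewrite Hper by lra. reflexivity. }
  assert (PY : forall s v, 0 < s < tbar -> vy (gamma s (v + 2 * PI)) = vy (gamma s v)).
  { intros s v Hs. rewrite Hper by lra. reflexivity. }
  assert (PZ : forall s v, 0 < s < tbar -> vz (gamma s (v + 2 * PI)) = vz (gamma s v)).
  { intros s v Hs. rewrite Hper by lra. reflexivity. }
  assert (HA : forall s, 0 < s < tbar ->
    Ap gamma s = vscal (1/2) (vRInt (fun u => cross (gamma s u) (vpu gamma s u)) 0 (2 * PI))).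
  { intros s Hs. unfold Ap. f_equal. unfold vRInt. f_equal; apply RInt_ext; intros x _;
    generalize (Hsp s x (conj (Rlt_le _ _ (proj1 Hs)) (proj2 Hs))); intro Hp;
    unfold tangent, cross, vscal, mkV, vx, vy, vz; simpl; field; lra. }
  assert (G : forall u, cross (vpt gamma t u) (vpu gamma t u) =
     vopp (vscal (speed gamma t u) (vscal (curvature gamma t u) (theta_binormal gamma theta t u)))).
  { intro u. apply (geo tbar gamma theta t u); auto.
    intro v. apply Hsp. lra. }
  unfold vis_derive. split; [|split].
  - apply (compo tbar (fun a b => vy (gamma a b)) (fun a b => vz (gamma a b)) _
      (fun u => vx (vscal (speed gamma t u) (vscal (curvature gamma t u) (theta_binormal gamma theta t u))))
      t _ (HY 2%nat) (HZ 2%nat) PY PZ Ht).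
    + intros s Hs. rewrite HA by exact Hs. reflexivity.
    + intro u. generalize (f_equal vx (G u)). intro E. exact E.
    + reflexivity.
  - apply (compo tbar (fun a b => vz (gamma a b)) (fun a b => vx (gamma a b)) _
      (fun u => vy (vscal (speed gamma t u) (vscal (curvature gamma t u) (theta_binormal gamma theta t u))))
      t _ (HZ 2%nat) (HX 2%nat) PZ PX Ht).
    + intros s Hs. rewrite HA by exact Hs. reflexivity.
    + intro u. generalize (f_equal vy (G u)). intro E. exact E.
    + reflexivity.
  - apply (compo tbar (fun a b => vx (gamma a b)) (fun a b => vy (gamma a b)) _
      (fun u => vz (vscal (speed gamma t u) (vscal (curvature gamma t u) (theta_binormal gamma theta t u))))
      t _ (HX 2%nat) (HY 2%nat) PX PY Ht).
    + intros s Hs. rewrite HA by exact Hs. reflexivity.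
    + intro u. generalize (f_equal vz (G u)). intro E. exact E.
    + reflexivity.
Qed.
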